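(* Let $(\mathcal Q,d)$ be a Hadamard space, $Y$ a $\mathcal Q$-valued random variable and $o\in\mathcal Q$. Let $m\in\arg\min_{q\in\mathcal Q}\mathbb E[d(Y,q)-d(Y,o)]$ (a Fréchet median), let $q\in\mathcal Q\setminus\{m\}$ and let $\eta\in[0,1]$. Then $$\mathbb E\big[d(Y,q)-d(Y,m)\big]\ \ge\ \tfrac12\,\eta^2\, d(q,m)^2\,\mathbb E\Big[\max\big(d(Y,m),d(Y,q)\big)^{-1}\,\mathbf 1_{A(m,q,\eta)}(Y)\Big].$$
   Context: A Hadamard space is a complete metric space $(\mathcal Q,d)$ such that for all $y_0,y_1\in\mathcal Q$ there is $m\in\mathcal Q$ with $\frac12 d(y_0,q)^2+\frac12 d(y_1,q)^2-\frac14 d(y_0,y_1)^2\ge d(q,m)^2$ for all $q\in\mathcal Q$ (complete CAT(0) space). For $p\ne q$ in a Hadamard space, $\gamma_{p\to q}:[0,d(p,q)]\to\mathcal Q$ denotes the unique unit-speed geodesic from $p$ to $q$ (i.e. $d(\gamma(s),\gamma(t))=|s-t|$). For a real function $g$, $g^{\oplus}$, $g^{\ominus}$ denote right and left derivatives. For $y\in\mathcal Q$ write $f_y(t):=d(y,\gamma_{p\to q}(t))$. The ''bowtie complement'' is $$A(p,q,\eta):=\Big\{y\in\mathcal Q:\ \max\big(f_y^{\oplus}(0)^2,\ f_y^{\ominus}(d(q,p))^2\big)\le 1-\eta^2\Big\}.$$ *)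

(* Defs.v *)
From HB Require Import structures.
From mathcomp Require Import all_boot all_order all_algebra.
From mathcomp Require Import all_classical all_reals all_analysis.
Set Implicit Arguments. Unset Strict Implicit. Unset Printing Implicit Defensive.
Import Order.TTheory GRing.Theory Num.Theory.
Import numFieldNormedType.Exports.
Local Open Scope classical_set_scope.
Local Open Scope ring_scope.

Section Hadamard.
Variables (R : realType) (Q : Type) (d : Q -> Q -> R).

Definition is_metric : Prop :=
  (forall x y, 0 <= d x y) /\ (forall x y, d x y = 0 <-> x = y) /\
  (forall x y, d x y = d y x) /\ (forall x y z, d x z <= d x y + d y z).

Definition d_cauchy (u : nat -> Q) : Prop :=
  forall e : R, 0 < e -> exists N : nat, forall m n : nat,
    (N <= m)%N -> (N <= n)%N -> d (u m) (u n) < e.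

Definition d_converges (u : nat -> Q) (x : Q) : Prop :=
  forall e : R, 0 < e -> exists N : nat, forall n : nat, (N <= n)%N -> d (u n) x < e.

Definition d_complete : Prop :=
  forall u : nat -> Q, d_cauchy u -> exists x, d_converges u x.

Definition hadamard : Prop :=
  is_metric /\ d_complete /\
  forall y0 y1 : Q, exists m : Q, forall q : Q,
    (1/2) * d y0 q ^+ 2 + (1/2) * d y1 q ^+ 2 - (1/4) * d y0 y1 ^+ 2 >= d q m ^+ 2.

Definition d_open (U : set Q) : Prop :=
  forall x, U x -> exists e : R, 0 < e /\ forall y, d x y < e -> U y.

(* g is a unit-speed geodesic from p to q, parametrised on [0, d p q]
   (values of g outside [0, d p q] are irrelevant) *)
Definition unit_geodesic (p q : Q) (g : R -> Q) : Prop :=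
  g 0 = p /\ g (d p q) = q /\
  forall s t : R, 0 <= s <= d p q -> 0 <= t <= d p q -> d (g s) (g t) = `|s - t|.

Definition right_deriv (f : R -> R) (t a : R) : Prop :=
  (fun h : R => (f (t + h) - f t) / h) @ (0 : R)^'+ --> a.

Definition left_deriv (f : R -> R) (t a : R) : Prop :=
  (fun h : R => (f t - f (t - h)) / h) @ (0 : R)^'+ --> a.

(* bowtie complement A(p,q,eta), using the (unique) unit-speed geodesic
   gamma_{p -> q}; f_y(t) = d(y, gamma(t)) *)
Definition bowtie_compl (p q : Q) (eta : R) : set Q :=
  [set y | forall g : R -> Q, unit_geodesic p q g ->
     exists a b : R,
       right_deriv (fun t => d y (g t)) 0 a /\
       left_deriv (fun t => d y (g t)) (d q p) b /\
       Num.max (a ^+ 2) (b ^+ 2) <= 1 - eta ^+ 2].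

End Hadamard.

(* Main.v *)
Require Import Defs.
From HB Require Import structures.
From mathcomp Require Import all_boot all_order all_algebra.
From mathcomp Require Import all_classical all_reals all_analysis.
Import Order.TTheory GRing.Theory Num.Theory.
Import numFieldNormedType.Exports.
From mathcomp Require Import lra zify ring.
From mathcomp Require Import measurable_realfun.
Set Implicit Arguments. Unset Strict Implicit. Unset Printing Implicit Defensive.
Local Open Scope classical_set_scope.
Local Open Scope ring_scope.
Section Geo.
Variables (R : realType) (Q : Type) (d : Q -> Q -> R).
Hypothesis hd : hadamard d.

Let met : is_metric d := hd.1.
Let d0 x y : 0 <= d x y := met.1 x y.
Let dxx x : d x x = 0. Proof. by apply/(met.2.1 x x). Qed.
Let deq x y : d x y = 0 -> x = y. Proof. by move/(met.2.1 x y). Qed.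
Let dC x y : d x y = d y x := met.2.2.1 x y.
Let dT x y z : d x z <= d x y + d y z := met.2.2.2 x y z.

Lemma sq_le_nonneg (a b : R) : 0 <= b -> a ^+ 2 <= b ^+ 2 -> a <= b.
Proof. move=> b0 h; case: (lerP a b) => // ab; nra. Qed.

Definition Mid (x z : Q) : Q := proj1_sig (cid (hd.2.2 x z)).
Lemma MidP x z y : (1/2) * d x y ^+ 2 + (1/2) * d z y ^+ 2 - (1/4) * d x z ^+ 2 >= d y (Mid x z) ^+ 2.
Proof. exact: (proj2_sig (cid (hd.2.2 x z)) y). Qed.

Lemma Mid_l x z : d x (Mid x z) = d x z / 2.
Proof.
have h1 := MidP x z x; have h2 := MidP x z z.
rewrite dxx (dC z x) dxx in h1 h2.
have a1 : d x (Mid x z) <= d x z / 2.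
  apply: sq_le_nonneg; first by rewrite divr_ge0.
  by move: h1; rewrite !expr2; nra.
have a2 : d z (Mid x z) <= d x z / 2.
  apply: sq_le_nonneg; first by rewrite divr_ge0.
  by move: h2; rewrite !expr2; nra.
have := dT x (Mid x z) z; rewrite (dC (Mid x z) z); lra.
Qed.

Lemma Mid_r x z : d (Mid x z) z = d x z / 2.
Proof.
have h1 := MidP x z x; have h2 := MidP x z z.
rewrite dxx (dC z x) dxx in h1 h2.
have a1 : d x (Mid x z) <= d x z / 2.
  apply: sq_le_nonneg; first by rewrite divr_ge0.
  by move: h1; rewrite !expr2; nra.
have a2 : d z (Mid x z) <= d x z / 2.
  apply: sq_le_nonneg; first by rewrite divr_ge0.
  by move: h2; rewrite !expr2; nra.
have := dT x (Mid x z) z; rewrite (dC (Mid x z) z) -/(d _ _); lra.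
Qed.

Lemma midpoint_cat x z c y : d x c = d x z / 2 -> d c z = d x z / 2 ->
  d y c ^+ 2 <= (1/2) * d x y ^+ 2 + (1/2) * d z y ^+ 2 - (1/4) * d x z ^+ 2.
Proof.
move=> h1 h2.
have hc := MidP x z c.
rewrite h1 (dC z c) h2 in hc.
have : d c (Mid x z) ^+ 2 <= 0 by move: hc; rewrite !expr2; nra.
move=> h0; have e0 : d c (Mid x z) = 0.
  by apply/eqP; rewrite eq_le d0 andbT; apply: sq_le_nonneg; rewrite // expr0n.
by rewrite (deq e0); exact: MidP.
Qed.

Lemma midpoint_convex x z c y : d x c = d x z / 2 -> d c z = d x z / 2 ->
  d y c <= (d x y + d z y) / 2.
Proof.
move=> h1 h2; have h := midpoint_cat y h1 h2.
have t1 := dT x z y; have t2 := dT z x y.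
rewrite (dC z x) in t2.
apply: sq_le_nonneg; first by rewrite divr_ge0 // addr_ge0.
move: h; rewrite !expr2 => h.
have hA := d0 x y; have hB := d0 z y; have hD := d0 x z.
have hh : (d x y - d z y) * (d x y - d z y) <= d x z * d x z.
  have : 0 <= (d x z - (d x y - d z y)) * (d x z + (d x y - d z y)).
    by apply: mulr_ge0; lra.
  nra.
nra.
Qed.
End Geo.
Section Grid.
Variables (R : realType) (Q : Type) (d : Q -> Q -> R).
Hypothesis hd : hadamard d.
Let met : is_metric d := hd.1.
Let d0 x y : 0 <= d x y := met.1 x y.
Let dxx x : d x x = 0. Proof. by apply/(met.2.1 x x). Qed.
Let deq x y : d x y = 0 -> x = y. Proof. by move/(met.2.1 x y). Qed.
Let dC x y : d x y = d y x := met.2.2.1 x y.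
Let dT x y z : d x z <= d x y + d y z := met.2.2.2 x y z.
Variables (a b : Q).

Fixpoint E (n k : nat) : Q := match n with
  | 0 => if k == 0%N then a else b
  | n'.+1 => if odd k then Mid hd (E n' k./2) (E n' k./2.+1) else E n' k./2 end.

Lemma E0 n : E n 0 = a.
Proof. by elim: n. Qed.

Lemma Edouble n k : E n.+1 k.*2 = E n k.
Proof. by rewrite /= odd_double doubleK. Qed.

Lemma Etop n : E n (2 ^ n) = b.
Proof.
elim: n => [//|n IH]; by rewrite expnS mul2n Edouble.
Qed.

Lemma Eadj n k : (k < 2 ^ n)%N -> d (E n k) (E n k.+1) = d a b / 2 ^+ n.
Proof.
elim: n k => [|n IH] k.
  by rewrite expn0 ltnS leqn0 => /eqP -> /=; rewrite expr0 divr1.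
move=> hk; rewrite exprS.
have [ok|ek] := boolP (odd k).
- have hk2 : (k./2 < 2 ^ n)%N.
    by move: hk; rewrite expnS -(odd_double_half k) ok; lia.
  rewrite /= ok /=.
  have -> : uphalf k = k./2.+1 by rewrite uphalf_half ok.
  rewrite (Mid_r hd) IH //; by rewrite invfM mulrA [in RHS]mulrAC.
- have hk3 : (k./2 < 2 ^ n)%N.
    by move: hk; rewrite expnS -(odd_double_half k) (negbTE ek); lia.
  rewrite /= (negbTE ek) /=.
  have -> : uphalf k = k./2 by rewrite uphalf_half (negbTE ek).
  by rewrite (Mid_l hd) IH //; rewrite invfM mulrA [in RHS]mulrAC.
Qed.
End Grid.
Section Grid2.
Variables (R : realType) (Q : Type) (d : Q -> Q -> R).
Hypothesis hd : hadamard d.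
Let met : is_metric d := hd.1.
Let d0 x y : 0 <= d x y := met.1 x y.
Let dxx x : d x x = 0. Proof. by apply/(met.2.1 x x). Qed.
Let dC x y : d x y = d y x := met.2.2.1 x y.
Let dT x y z : d x z <= d x y + d y z := met.2.2.2 x y z.
Variables (a b : Q).
Local Notation E := (E hd a b).
Local Notation dl n := (d a b / 2 ^+ n).

Lemma Edist_le n j i : (j + i <= 2 ^ n)%N -> d (E n j) (E n (j + i)) <= i%:R * dl n.
Proof.
elim: i => [|i IH] h; first by rewrite addn0 dxx mul0r.
rewrite addnS; apply: le_trans (dT _ (E n (j + i)) _) _.
rewrite (Eadj hd) ?(leq_trans _ h) ?addnS //.
rewrite -[i.+1]addn1 natrD mulrDl mul1r lerD2r.
by apply: IH; apply: leq_trans h; rewrite addnS.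
Qed.

Lemma Edist n j i : (j + i <= 2 ^ n)%N -> d (E n j) (E n (j + i)) = i%:R * dl n.
Proof.
move=> h; apply/eqP; rewrite eq_le Edist_le //=.
have h1 := @Edist_le n 0 j; rewrite add0n (E0 hd) in h1.
have h2 := @Edist_le n (j + i) (2 ^ n - (j + i)); rewrite subnKC // (Etop hd) in h2.
have h3 := dT a (E n j) b; have h4 := dT (E n j) (E n (j + i)) b.
have e : (2 ^ n)%:R * dl n = d a b.
  by rewrite natrX mulrC -mulrA mulVf ?mulr1 // expf_neq0.
have e2 : (2 ^ n - (j + i))%:R = (2 ^ n)%:R - j%:R - i%:R :> R.
  by rewrite natrB // natrD opprD addrA.
rewrite e2 in h2.
have hj : (j <= 2 ^ n)%N by apply: leq_trans h; rewrite leq_addr.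
have := h1 hj; have := h2 (leqnn _).
lra.
Qed.
End Grid2.
Section Grid3.
Variables (R : realType) (Q : Type) (d : Q -> Q -> R).
Hypothesis hd : hadamard d.
Let met : is_metric d := hd.1.
Let d0 x y : 0 <= d x y := met.1 x y.
Let dxx x : d x x = 0. Proof. by apply/(met.2.1 x x). Qed.
Let dC x y : d x y = d y x := met.2.2.1 x y.
Let dT x y z : d x z <= d x y + d y z := met.2.2.2 x y z.
Variables (a b : Q).
Local Notation E := (E hd a b).
Local Notation dl n := (d a b / 2 ^+ n).

Lemma Escale n p k : E (n + p) (2 ^ p * k) = E n k.
Proof.
elim: p => [|p IH]; first by rewrite addn0 expn0 mul1n.
by rewrite addnS expnS -mulnA mul2n Edouble.
Qed.

Lemma EdistR n j k : (j <= 2 ^ n)%N -> (k <= 2 ^ n)%N ->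
  d (E n j) (E n k) = `|j%:R - k%:R| * dl n.
Proof.
move=> hj hk; case: (leqP j k) => jk.
- rewrite -(subnKC jk) Edist; last by rewrite subnKC.
  by rewrite natrD opprD addrA subrr sub0r normrN ger0_norm ?ler0n.
- have jk' := ltnW jk.
  rewrite dC -(subnKC jk') Edist; last by rewrite subnKC.
  by rewrite natrD addrAC subrr add0r ger0_norm ?ler0n.
Qed.
End Grid3.
Section Geod.
Variables (R : realType) (Q : Type) (d : Q -> Q -> R).
Hypothesis hd : hadamard d.
Let met : is_metric d := hd.1.
Let d0 x y : 0 <= d x y := met.1 x y.
Let dxx x : d x x = 0. Proof. by apply/(met.2.1 x x). Qed.
Let deq x y : d x y = 0 -> x = y. Proof. by move/(met.2.1 x y). Qed.
Let dC x y : d x y = d y x := met.2.2.1 x y.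
Let dT x y z : d x z <= d x y + d y z := met.2.2.2 x y z.
Variables (a b : Q).
Hypothesis hab : a <> b.
Local Notation E := (E hd a b).
Local Notation L := (d a b).
Local Notation dl n := (d a b / 2 ^+ n).

Let L0 : 0 < L.
Proof. by rewrite lt_def d0 andbT; apply/eqP => /deq. Qed.

Let dl0 n : 0 < dl n.
Proof. by rewrite divr_gt0 // exprn_gt0. Qed.

Let e2n n : (2 ^+ n : R) != 0.
Proof. by rewrite expf_neq0. Qed.

Definition kk n (t : R) : nat := Num.truncn (t * 2 ^+ n / L).
Definition pos n t : R := (kk n t)%:R * dl n.
Definition Pt n t : Q := E n (kk n t).

Lemma pos_itv n t : 0 <= t -> pos n t <= t < pos n t + dl n.
Proof.
move=> t0; have x0 : 0 <= t * 2 ^+ n / L.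
  by rewrite mulr_ge0 // ?invr_ge0 ?mulr_ge0 ?exprn_ge0 // ltW.
have /andP[h1 h2] := truncn_itv x0.
rewrite /pos -/(kk n t) in h1 h2 *.
have e : t * 2 ^+ n / L * dl n = t.
  by field; rewrite e2n; apply/andP; split => //; rewrite lt0r_neq0.
rewrite -[(kk n t).+1]addn1 natrD in h2.
apply/andP; split.
  by rewrite -[leRHS]e ler_pM2r.
have -> : (kk n t)%:R * dl n + dl n = ((kk n t)%:R + 1) * dl n by rewrite mulrDl mul1r.
by rewrite -[ltLHS]e ltr_pM2r.
Qed.

Lemma kk_le n t : 0 <= t <= L -> (kk n t <= 2 ^ n)%N.
Proof.
move=> /andP[t0 tL]; rewrite /kk truncn_le_nat.
apply: (@le_lt_trans _ _ (2 ^+ n)).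
  rewrite ler_pdivrMr // mulrC ler_pM2l // exprn_gt0 //.
by rewrite -natrX ltr_nat.
Qed.

Lemma Pt_dist n s t : 0 <= s <= L -> 0 <= t <= L ->
  d (Pt n s) (Pt n t) = `|pos n s - pos n t|.
Proof.
move=> hs ht; rewrite /Pt (EdistR hd) ?kk_le // /pos -mulrBl normrM.
by rewrite (ger0_norm (ltW (dl0 n))).
Qed.

Lemma Pt_cauchy n r t : 0 <= t <= L -> d (Pt n t) (Pt (n + r) t) <= dl n.
Proof.
move=> ht; rewrite /Pt -(Escale hd a b n r (kk n t)) (EdistR hd) ?kk_le //; last first.
  by rewrite expnD mulnC leq_mul2r kk_le // orbT.
rewrite -(ger0_norm (ltW (dl0 (n + r)))) -normrM mulrBl.
have -> : (2 ^ r * kk n t)%:R * dl (n + r) = pos n t.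
  rewrite /pos natrM natrX exprD; field; rewrite !e2n //.
rewrite -/(pos (n + r) t).
case/andP: ht => t0 _.
have /andP[a1 a2] := pos_itv n t0; have /andP[b1 b2] := pos_itv (n + r) t0.
have : dl (n + r) <= dl n.
  rewrite exprD invfM mulrA ler_piMr //.
    by rewrite mulr_ge0 // ?invr_ge0 ?exprn_ge0 // ltW.
  by rewrite invf_le1 ?exprn_gt0 //; apply: exprn_ege1; rewrite ler1n.
move=> hle; rewrite ler_norml; apply/andP; split; lra.
Qed.

Lemma dl_anti n p : (n <= p)%N -> dl p <= dl n.
Proof.
move=> /subnKC <-; set r := (p - n)%N.
rewrite exprD invfM mulrA ler_piMr //.
  by rewrite mulr_ge0 // ?invr_ge0 ?exprn_ge0 // ltW.
by rewrite invf_le1 ?exprn_gt0 //; apply: exprn_ege1; rewrite ler1n.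
Qed.

Lemma dl_small e : 0 < e -> exists N, dl N < e.
Proof.
move=> e0; exists (Num.truncn (L / e)).
set N := Num.truncn (L / e).
have h1 : L / e < N.+1%:R by apply: truncnS_gt.
have h2 : (N.+1 <= 2 ^ N)%N by apply: ltn_expl.
have h3 : N.+1%:R <= (2 ^+ N : R) by rewrite -natrX ler_nat.
have h4 : L / e < 2 ^+ N by apply: lt_le_trans h3.
rewrite ltr_pdivrMr ?exprn_gt0 // mulrC -ltr_pdivrMr //.
Qed.

Lemma Pt_cauchy2 n p t : 0 <= t <= L -> (n <= p)%N -> d (Pt n t) (Pt p t) <= dl n.
Proof. by move=> ht /subnKC <-; apply: Pt_cauchy. Qed.

Lemma Pt_is_cauchy t : 0 <= t <= L -> d_cauchy d (fun n => Pt n t).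
Proof.
move=> ht e e0; have [N hN] := @dl_small (e / 2) (divr_gt0 e0 (ltr0Sn _ 1)).
exists N => i j hi hj.
have h3 := dT (Pt i t) (Pt N t) (Pt j t).
rewrite (dC (Pt i t) (Pt N t)) in h3.
have h1 := Pt_cauchy2 ht hi; have h2 := Pt_cauchy2 ht hj; lra.
Qed.

Definition geod (t : R) : Q :=
  match pselect (exists x, d_converges d (fun n => Pt n t) x) with
  | left h => proj1_sig (cid h)
  | right _ => a end.

Lemma geod_conv t : 0 <= t <= L -> d_converges d (fun n => Pt n t) (geod t).
Proof.
move=> ht; rewrite /geod; case: pselect => [h|h]; first exact: (proj2_sig (cid h)).
by exfalso; apply: h; apply: hd.2.1; apply: Pt_is_cauchy.
Qed.

Lemma conv_const (u : nat -> Q) c x : (forall n, u n = c) -> d_converges d u x -> x = c.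
Proof.
move=> uc hx; apply: deq; apply/eqP; rewrite eq_le d0 andbT.
apply/ler_addgt0Pr => e e0; rewrite add0r.
have [N hN] := hx e e0; have := hN N (leqnn N); rewrite uc dC => h; exact: ltW.
Qed.

Lemma geod0 : geod 0 = a.
Proof.
apply: conv_const (geod_conv _); last by rewrite lexx /= ltW.
by move=> n; rewrite /Pt /kk !mul0r truncn0 E0.
Qed.

Lemma geodL : geod L = b.
Proof.
apply: conv_const (geod_conv _); last by rewrite lexx ltW.
move=> n; rewrite /Pt /kk mulrC mulrA mulVf ?lt0r_neq0 // mul1r -natrX natrK.
exact: Etop.
Qed.

Lemma pos_close n s t : 0 <= s -> 0 <= t ->
  `| `|pos n s - pos n t| - `|s - t| | <= dl n.
Proof.
move=> s0 t0; have /andP[a1 a2] := pos_itv n s0; have /andP[b1 b2] := pos_itv n t0.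
apply: le_trans (ler_dist_dist _ _) _.
rewrite ler_norml; apply/andP; split; lra.
Qed.

Lemma geod_iso s t : 0 <= s <= L -> 0 <= t <= L -> d (geod s) (geod t) = `|s - t|.
Proof.
move=> hs ht.
have key : forall e, 0 < e -> `|d (geod s) (geod t) - `|s - t| | < e.
  move=> e e0.
  have e4 : 0 < e / 4 by rewrite divr_gt0.
  have [N1 h1] := geod_conv hs e4; have [N2 h2] := geod_conv ht e4.
  have [N3 h3] := dl_small e4.
  set n := maxn (maxn N1 N2) N3.
  have hn1 : (N1 <= n)%N by rewrite /n !leq_max leqnn.
  have hn2 : (N2 <= n)%N by rewrite /n !leq_max leqnn orbT.
  have hn3 : (N3 <= n)%N by rewrite /n !leq_max leqnn orbT.
  have g1 := h1 n hn1; have g2 := h2 n hn2; have g3 := dl_anti hn3.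
  have g4 := pos_close n (proj1 (andP hs)) (proj1 (andP ht)).
  rewrite -Pt_dist // in g4.
  have t1 := dT (geod s) (Pt n s) (geod t); have t2 := dT (Pt n s) (Pt n t) (geod t).
  have t3 := dT (Pt n s) (geod s) (Pt n t); have t4 := dT (geod s) (geod t) (Pt n t).
  rewrite (dC (geod s) (Pt n s)) in t1.
  rewrite (dC (geod t) (Pt n t)) in t4.
  move: g4; rewrite ler_norml => /andP[g4 g5].
  rewrite ltr_norml; apply/andP; split; lra.
apply/eqP; rewrite -subr_eq0 -normr_eq0; apply/eqP.
apply/eqP; rewrite eq_le normr_ge0 andbT.
apply/ler_addgt0Pr => e e0; rewrite add0r; exact: ltW (key e e0).
Qed.

Lemma geod_unit : unit_geodesic d a b geod.
Proof. by split; [exact: geod0|split; [exact: geodL|exact: geod_iso]]. Qed.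
End Geod.
Lemma cvg_le_bound (R : realType) (u : nat -> R) l b :
  u n @[n --> \oo] --> l -> (forall n, u n <= b) -> l <= b.
Proof.
move=> hu hb; rewrite -(cvg_lim _ hu) //.
by apply: limr_le; [exact: cvgP hu | exact: nearW].
Qed.
Section Pointwise.
Variables (R : realType) (Q : Type) (d : Q -> Q -> R).
Hypothesis hd : hadamard d.
Let met : is_metric d := hd.1.
Let d0 x y : 0 <= d x y := met.1 x y.
Let dxx x : d x x = 0. Proof. by apply/(met.2.1 x x). Qed.
Let deq x y : d x y = 0 -> x = y. Proof. by move/(met.2.1 x y). Qed.
Let dC x y : d x y = d y x := met.2.2.1 x y.
Let dT x y z : d x z <= d x y + d y z := met.2.2.2 x y z.
Variables (m q : Q) (g : R -> Q).
Hypothesis hmq : m <> q.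
Hypothesis hg : unit_geodesic d m q g.
Local Notation L := (d m q).

Let L0 : 0 < L.
Proof. by rewrite lt_def d0 andbT; apply/eqP => /deq. Qed.

Definition tn (n : nat) : R := L / 2 ^+ n.

Lemma tn_gt0 n : 0 < tn n.
Proof. by rewrite divr_gt0 // exprn_gt0. Qed.

Lemma tn_le n : tn n <= L.
Proof.
rewrite /tn ler_pdivrMr ?exprn_gt0 // ler_peMr ?(ltW L0) //.
by apply: exprn_ege1; rewrite ler1n.
Qed.

Lemma tnS n : tn n.+1 = tn n / 2.
Proof. by rewrite /tn exprS invfM mulrA mulrAC. Qed.

Lemma tn0 : tn 0 = L.
Proof. by rewrite /tn expr0 divr1. Qed.

Let gd s t : 0 <= s <= L -> 0 <= t <= L -> d (g s) (g t) = `|s - t|.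
Proof. exact: hg.2.2. Qed.

Let itv_tn n : 0 <= tn n <= L.
Proof. by rewrite ltW ?tn_gt0 // tn_le. Qed.

Let itv0 : (0:R) <= 0 <= L.
Proof. by rewrite lexx ltW. Qed.

Lemma d_m_gtn n : d m (g (tn n)) = tn n.
Proof.
by rewrite -{1}hg.1 gd // sub0r normrN gtr0_norm ?tn_gt0.
Qed.

Lemma mid_tn n : d m (g (tn n.+1)) = d m (g (tn n)) / 2 /\
                 d (g (tn n.+1)) (g (tn n)) = d m (g (tn n)) / 2.
Proof.
rewrite !d_m_gtn tnS; split => //.
rewrite gd // ?tnS //; last by rewrite -tnS.
have t0 := tn_gt0 n.
rewrite ler0_norm; last by lra.
lra.
Qed.

Variable y : Q.
Local Notation D0 := (d y m).
Local Notation DL := (d y q).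
Definition F n := d y (g (tn n)).
Definition Qn n := (F n - D0) / tn n.
Definition Hn n := (F n ^+ 2 - D0 ^+ 2 - tn n ^+ 2) / tn n.

Lemma F0 : F 0 = DL.
Proof. by rewrite /F tn0 hg.2.1. Qed.

Lemma Qn_mono n : Qn n.+1 <= Qn n.
Proof.
have [h1 h2] := mid_tn n.
have := midpoint_convex hd y h1 h2.
rewrite -/(F n.+1) (dC m y) (dC (g (tn n)) y) -/(F n) => h.
have t0 := tn_gt0 n.
have e : Qn n.+1 = (2 * (F n.+1 - D0)) / tn n.
  by rewrite /Qn tnS; field; rewrite lt0r_neq0.
rewrite e /Qn ler_pM2r ?invr_gt0 //.
lra.
Qed.

Lemma Hn_mono n : Hn n.+1 <= Hn n.
Proof.
have [h1 h2] := mid_tn n.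
have := midpoint_cat hd y h1 h2.
rewrite -/(F n.+1) (dC m y) (dC (g (tn n)) y) -/(F n) d_m_gtn => h.
have t0 := tn_gt0 n.
have e : Hn n.+1 = (2 * (F n.+1 ^+ 2 - D0 ^+ 2 - tn n ^+ 2 / 4)) / tn n.
  by rewrite /Hn tnS; field; rewrite lt0r_neq0.
rewrite e /Hn ler_pM2r ?invr_gt0 //.
lra.
Qed.

Lemma Qn_le0 n : Qn n <= Qn 0.
Proof. elim: n => [//|n IH]; exact: le_trans (Qn_mono n) IH. Qed.

Lemma Hn_le0 n : Hn n <= Hn 0.
Proof. elim: n => [//|n IH]; exact: le_trans (Hn_mono n) IH. Qed.

Definition un n := (DL - D0) - L * Qn n.

Lemma un_ge0 n : 0 <= un n.
Proof.
have := Qn_le0 n; rewrite /un /Qn F0 tn0 => h.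
rewrite subr_ge0 -ler_pdivlMl //.
by rewrite [L^-1 * _]mulrC.
Qed.

Lemma un_alt n : un n = (DL - D0) - (L / tn n) * (F n - D0).
Proof. rewrite /un /Qn; ring. Qed.

Lemma tn_cvg : tn n @[n --> \oo] --> 0.
Proof.
have -> : tn = geometric L (2^-1).
  by apply: funext => n; rewrite /tn /geometric /= exprVn.
apply: cvg_geometric; rewrite ger0_norm ?invr_ge0 // invf_lt1 //.
by rewrite ltr1n.
Qed.

Lemma Qn_cvg a : right_deriv (fun t => d y (g t)) 0 a -> Qn n @[n --> \oo] --> a.
Proof.
move=> ha.
have := (cvg_at_rightP _ 0 a).1 ha tn (conj tn_gt0 tn_cvg).
have e : (fun n => (fun h => (d y (g (0 + h)) - d y (g 0)) / h) (tn n)) = Qn.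
  by apply: funext => n; rewrite /= add0r hg.1.
by rewrite e.
Qed.

Lemma Hn_alt n : Hn n = Qn n * (2 * D0 + tn n * Qn n) - tn n.
Proof. rewrite /Hn /Qn; field; exact: lt0r_neq0 (tn_gt0 n). Qed.

Lemma key_bound a (eta : R) : right_deriv (fun t => d y (g t)) 0 a ->
  a ^+ 2 <= 1 - eta ^+ 2 ->
  (2^-1 * eta ^+ 2 * L ^+ 2) / Num.max D0 DL <= DL - D0 - L * a.
Proof.
move=> ha hae.
have hQ := Qn_cvg ha.
have h1 : a <= (DL - D0) / L.
  by have := cvg_le_bound hQ Qn_le0; rewrite /Qn F0 tn0.
have hH : Hn n @[n --> \oo] --> a * (2 * D0 + 0 * a) - 0.
  have -> : Hn = (fun n => Qn n * (2 * D0 + tn n * Qn n) - tn n).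
    by apply: funext => n; rewrite Hn_alt.
  apply: cvgB; last exact: tn_cvg.
  apply: cvgM; first exact: hQ.
  apply: cvgD; first exact: cvg_cst.
  exact: cvgM tn_cvg hQ.
have h2 : a * (2 * D0 + 0 * a) - 0 <= (DL ^+ 2 - D0 ^+ 2 - L ^+ 2) / L.
  by have := cvg_le_bound hH Hn_le0; rewrite /Hn F0 tn0.
rewrite mul0r addr0 subr0 in h2.
rewrite ler_pdivlMr // in h1; rewrite ler_pdivlMr // in h2.
have hD0 := d0 y m; have hDL := d0 y q; have L0' := L0.
have hT := dT m y q; rewrite (dC m y) in hT.
have hM : 0 < Num.max D0 DL.
  by rewrite lt_max; case: (ltP 0 D0) => //= h0; lra.
have hM1 : D0 <= Num.max D0 DL by rewrite le_max lexx.
have hM2 : DL <= Num.max D0 DL by rewrite le_max lexx orbT.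
set M := Num.max D0 DL in hM hM1 hM2 *.
set u := DL - D0 - L * a.
have u0 : 0 <= u by rewrite /u; lra.
have k1 : u * (DL + D0 + L * a) >= L ^+ 2 * (1 - a ^+ 2).
  rewrite /u; nra.
have k2 : L ^+ 2 * (1 - a ^+ 2) >= L ^+ 2 * eta ^+ 2.
  rewrite ler_pM2l ?exprn_gt0 //; lra.
have k3 : u * (DL + D0 + L * a) <= u * (2 * M).
  by rewrite ler_wpM2l //; lra.
rewrite ler_pdivrMr //.
nra.
Qed.

Lemma un_cvg a : right_deriv (fun t => d y (g t)) 0 a ->
  un n @[n --> \oo] --> DL - D0 - L * a.
Proof.
move=> ha; apply: cvgB; first exact: cvg_cst.
apply: cvgM; first exact: cvg_cst.
exact: Qn_cvg.
Qed.

Lemma un_nd : nondecreasing_seq un.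
Proof.
apply/nondecreasing_seqP => n; rewrite /un lerD2l lerN2 ler_pM2l //.
exact: Qn_mono.
Qed.
End Pointwise.
Lemma meas_dist (R : realType) (Q : Type) (d : Q -> Q -> R)
  (dO : measure_display) (Omega : measurableType dO) (Y : Omega -> Q) (p : Q) :
  is_metric d -> (forall U : set Q, d_open d U -> measurable (Y @^-1` U)) ->
  measurable_fun setT (fun w => d (Y w) p).
Proof.
move=> met hY; apply: (measurability _ (measurable_realfun.RGenOInfty.measurableE R)) => //.
move=> _ [_ [x ->] <-]; rewrite setTI.
have -> : (fun w => d (Y w) p) @^-1` `]x, +oo[%classic = Y @^-1` [set z | x < d z p].
  by apply/seteqP; split => w /=; rewrite in_itv /= andbT.
apply: hY => z /= xz; exists (d z p - x); split; first by rewrite subr_gt0.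
move=> y hy; have := met.2.2.2 z y p; have := met.2.2.1 z y; lra.
Qed.
Lemma ge0_le_integral_nm dT (T : measurableType dT) (R : realType)
  (mu : {measure set T -> \bar R}) (f1 f2 : T -> \bar R) :
  (forall x, (0 <= f1 x)%E) -> (forall x, (f1 x <= f2 x)%E) ->
  (\int[mu]_x f1 x <= \int[mu]_x f2 x)%E.
Proof.
move=> f10 f12.
have f20 : forall x, (0 <= f2 x)%E by move=> x; exact: le_trans (f10 x) (f12 x).
rewrite !ge0_integralTE //.
apply: ereal_sup_le => _ [h hh <-]; exists h => //= x.
exact: le_trans (hh x) (f12 x).
Qed.
Section Main.
Variables (R : realType) (Q : Type) (d : Q -> Q -> R)
  (dO : measure_display) (Omega : measurableType dO)
  (P : probability Omega R) (Y : Omega -> Q) (o m q : Q) (eta : R).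
Hypothesis hd : hadamard d.
Hypothesis hY : forall U : set Q, d_open d U -> measurable (Y @^-1` U).
Hypothesis hmed : forall q' : Q,
     (\int[P]_w (d (Y w) m - d (Y w) o)%:E <= \int[P]_w (d (Y w) q' - d (Y w) o)%:E)%E.

Let met := hd.1.
Let mdist p : measurable_fun setT (fun w => d (Y w) p) := @meas_dist _ _ d _ _ Y p met hY.

Lemma int_diff p p' : P.-integrable setT (EFin \o (fun w => d (Y w) p - d (Y w) p')).
Proof.
apply: (@le_integrable _ _ _ P setT _ _ (EFin \o cst (d p p'))) => //.
- by apply/measurable_realfun.measurable_EFinP; apply: measurable_realfun.measurable_funB.
- move=> w _; rewrite /= lee_fin (ger0_norm (met.1 p p')).
  have h1 := met.2.2.2 (Y w) p' p; have h2 := met.2.2.2 (Y w) p p'.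
  have h3 := met.2.2.1 p p'.
  rewrite ler_norml; apply/andP; split; lra.
- exact: finite_measure_integrable_cst.
Qed.

Lemma int_nonneg p : (0 <= \int[P]_w (d (Y w) p - d (Y w) m)%:E)%E.
Proof.
have e : (fun w => (d (Y w) p - d (Y w) m)%:E) =
   ((EFin \o (fun w => (d (Y w) p - d (Y w) o)%R)) \- (EFin \o (fun w => (d (Y w) m - d (Y w) o)%R)))%E.
  by apply: funext => w; rewrite /= -EFinB; congr (_%:E); lra.
rewrite e integralB // ?int_diff // subre_ge0; first exact: hmed.
exact/integrable_fin_num/int_diff.
Qed.

Theorem main_sec : q <> m -> 0 <= eta <= 1 ->
  (\int[P]_w (d (Y w) q - d (Y w) m)%:E >=
   (2^-1 * eta ^+ 2 * d q m ^+ 2)%:E *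
   \int[P]_w ((Num.max (d (Y w) m) (d (Y w) q))^-1 *
              \1_(bowtie_compl d m q eta) (Y w))%:E)%E.
Proof.
move=> hqm /andP[eta0 eta1].
have hmq : m <> q by move=> h; apply: hqm; rewrite h.
have IX0 := int_nonneg q.
set IX := (\int[P]_w (d (Y w) q - d (Y w) m)%:E)%E in IX0 *.
have [->|etan0] := eqVneq eta 0.
  by rewrite expr0n /= mulr0 mul0r mul0e.
set c := 2^-1 * eta ^+ 2 * d q m ^+ 2.
have L0 : 0 < d m q.
  by rewrite lt_def met.1 andbT; apply/eqP => /(met.2.1 m q).
have c0 : 0 < c.
  rewrite /c mulr_gt0 ?exprn_gt0 ?(met.2.2.1 q m) // mulr_gt0 ?invr_gt0 //.
  by rewrite exprn_gt0 // lt_def etan0.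
set g := geod hd m q.
have hg : unit_geodesic d m q g := geod_unit hd hmq.
set u := fun n w => un d m q g (Y w) n.
set v : nat -> Omega -> \bar R := fun n w => ((c^-1 * u n w)%:E)%E.
have mu n : measurable_fun setT (u n).
  have -> : u n = (fun w => (d (Y w) q - d (Y w) m) -
      (d m q / tn d m q n) * (d (Y w) (g (tn d m q n)) - d (Y w) m)).
    by apply: funext => w; rewrite /u un_alt /F.
  apply: measurable_realfun.measurable_funB; first exact: measurable_realfun.measurable_funB.
  apply: measurable_realfun.measurable_funM; first exact: measurable_cst.
  exact: measurable_realfun.measurable_funB.
have Iu n : (\int[P]_w (u n w)%:E <= IX)%E.
  set k := d m q / tn d m q n.
  have e : (fun w => (u n w)%:E) =
     ((EFin \o (fun w => (d (Y w) q - d (Y w) m)%R)) \-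
      (fun w => k%:E * (EFin \o (fun w => (d (Y w) (g (tn d m q n)) - d (Y w) m)%R)) w))%E.
    by apply: funext => w; rewrite /u un_alt /F /= -EFinD.
  rewrite e integralB //; last by apply: integrableZl => //; exact: int_diff.
    2: exact: int_diff.
  rewrite integralZl //; last exact: int_diff.
  have k0 : 0 <= k by rewrite /k divr_ge0 // ?ltW // tn_gt0.
  have := int_nonneg (g (tn d m q n)) => hE.
  rewrite -[leRHS]sube0; apply: leeB => //.
  by apply: mule_ge0.
have v0 n w : (0 <= v n w)%E.
  by rewrite /v lee_fin; apply: mulr_ge0; [rewrite invr_ge0 ltW | exact: (un_ge0 hd hmq hg)].
have nd w : {homo v^~ w : i j / (i <= j)%N >-> (i <= j)%E}.
  move=> i j ij; rewrite /v lee_fin ler_pM2l ?invr_gt0 //.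
  exact: (un_nd hd hmq hg).
have mv n : measurable_fun [set: Omega] (v n : Omega -> \bar R).
  apply/measurable_realfun.measurable_EFinP.
  by apply: measurable_realfun.measurable_funM; first exact: measurable_cst.
have hMC := @cvg_monotone_convergence _ _ _ P setT measurableT v mv
   (fun n w _ => v0 n w) (fun w _ => nd w).
have Ilim : (\int[P]_w limn (v^~ w) <= (c^-1)%:E * IX)%E.
  rewrite -(cvg_lim _ hMC) //; apply: lime_le; first exact: cvgP hMC.
  apply: nearW => n.
  have -> : v n = (fun w => (c^-1)%:E * (u n w)%:E)%E.
    by apply: funext => w; rewrite /v EFinM.
  rewrite ge0_integralZl_EFin //; last by rewrite invr_ge0 ltW.
  - by apply: lee_pmul => //; [rewrite lee_fin invr_ge0 ltW|apply: integral_ge0 => w _; exact: (un_ge0 hd hmq hg)].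
  - by move=> w _; exact: (un_ge0 hd hmq hg).
  - by apply/measurable_realfun.measurable_EFinP.
have cvv w : cvgn (v^~ w) by apply: ereal_nondecreasing_is_cvgn; exact: nd.
have pw w : (((Num.max (d (Y w) m) (d (Y w) q))^-1 *
              \1_(bowtie_compl d m q eta) (Y w))%:E <= limn (v^~ w))%E.
  rewrite indicE; have [hA|hA] := boolP (Y w \in bowtie_compl d m q eta).
  - rewrite mulr1; move: hA; rewrite inE => /(_ g hg) [a [b [ha [hb hab]]]].
    have ha2 : a ^+ 2 <= 1 - eta ^+ 2 by apply: le_trans hab; rewrite le_max lexx.
    have kb := key_bound hd hmq hg ha ha2.
    have uc := un_cvg hd hmq hg ha.
    have vc : v^~ w @ \oo --> (c^-1 * (d (Y w) q - d (Y w) m - d m q * a))%:E.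
      apply: cvg_EFin; first exact: nearW.
      exact: cvgM (cvg_cst _) uc.
    rewrite (cvg_lim _ vc) // lee_fin.
    rewrite -(ler_pM2l c0) mulrA mulfV ?gt_eqF // mul1r.
    by move: kb; rewrite /c (met.2.2.1 q m).
  - rewrite mulr0; apply: lime_ge; first exact: cvv.
    by apply: nearW => n; exact: v0.
have phi0 w : (0 <= ((Num.max (d (Y w) m) (d (Y w) q))^-1 *
              \1_(bowtie_compl d m q eta) (Y w))%:E)%E.
  rewrite lee_fin mulr_ge0 // ?invr_ge0 ?le_max ?met.1 // indicE; by case: (Y w \in bowtie_compl d m q eta).
have I1 := ge0_le_integral_nm P phi0 pw.
apply: le_trans (lee_pmul _ _ (lexx _) (le_trans I1 Ilim)) _.
- by rewrite lee_fin ltW.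
- exact: integral_ge0.
by rewrite muleA -EFinM mulfV ?gt_eqF // mul1e.
Qed.
End Main.

Theorem mainTheorem2 (R : realType) (Q : Type) (d : Q -> Q -> R)
  (dO : measure_display) (Omega : measurableType dO)
  (P : probability Omega R) (Y : Omega -> Q) (o m q : Q) (eta : R) :
  hadamard d ->
  (forall U : set Q, d_open d U -> measurable (Y @^-1` U)) ->
  (forall q' : Q,
     (\int[P]_w (d (Y w) m - d (Y w) o)%:E <=
      \int[P]_w (d (Y w) q' - d (Y w) o)%:E)%E) ->
  q <> m ->
  0 <= eta <= 1 ->
  (\int[P]_w (d (Y w) q - d (Y w) m)%:E >=
   (2^-1 * eta ^+ 2 * d q m ^+ 2)%:E *
   \int[P]_w ((Num.max (d (Y w) m) (d (Y w) q))^-1 *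
              \1_(bowtie_compl d m q eta) (Y w))%:E)%E.
Proof.
move=> hd hY hmed hqm heta.
exact: (@main_sec R Q d dO Omega P Y o m q eta hd hY hmed hqm heta).
Qed.
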